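(* Let $b_1,b_2,b_3,b_4\in\mathbb C^*$, $B=b_1b_2b_3b_4$, and let $\Lambda\in\mathbb C^*$ with $\Lambda^2\neq B$. Put $\lambda=\Lambda^2/B$, $$F_{\rm eq}=-\frac{B\Lambda(S_1^++2S_1^-\Lambda+S_3^-\Lambda^2)}{(B-\Lambda^2)^2},\quad G_{\rm eq}=-\frac{B\Lambda(S_3^++2S_1^+\Lambda+S_1^-\Lambda^2)}{(B-\Lambda^2)^2},$$ $$\mu=\frac{\Lambda(\Lambda+b_1b_2)(\Lambda+b_1b_3)(\Lambda+b_1b_4)(\Lambda+b_2b_3)(\Lambda+b_2b_4)(\Lambda+b_3b_4)}{(B-\Lambda^2)^4},$$ and for $\phi\in\mathbb C^*$ define $$F(\phi)=\phi+F_{\rm eq}+\mu\phi^{-1},\qquad G(\phi)=\Lambda\phi+G_{\rm eq}+\frac{B}{\Lambda}\mu\phi^{-1}.$$ Then, as identities of rational functions in $\phi$, with $F=F(\phi)$, $G=G(\phi)$, $\bar F=F(\lambda\phi)$, $\bar G=G(\lambda\phi)$: $$(GF-1)(G\bar F-1)=(b_1^{-1}G-1)(b_2^{-1}G-1)(b_3^{-1}G-1)(b_4^{-1}G-1),$$ $$(G\bar F-1)(\bar G\bar F-1)=(b_1\bar F-1)(b_2\bar F-1)(b_3\bar F-1)(b_4\bar F-1).$$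
   Context: $S_i^{\pm}$ denotes the $i$-th elementary symmetric polynomial in $b_1^{\pm1},b_2^{\pm1},b_3^{\pm1},b_4^{\pm1}$, i.e. $(z-b_1^{\pm1})(z-b_2^{\pm1})(z-b_3^{\pm1})(z-b_4^{\pm1})=z^4-S_1^\pm z^3+S_2^\pm z^2-S_3^\pm z+S_4^\pm$. *)

(* Defs.v *)
(* complex numbers: an arbitrary numClosedFieldType C (C-like field;
   covers algC); the statement is a purely algebraic identity. *)
From HB Require Import structures.
From mathcomp Require Import all_boot all_order all_algebra all_field.
Set Implicit Arguments. Unset Strict Implicit. Unset Printing Implicit Defensive.
Import GRing.Theory Num.Theory.
Local Open Scope ring_scope.

Definition esym1 {C : numClosedFieldType} (x1 x2 x3 x4 : C) : C := x1 + x2 + x3 + x4.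
Definition esym3 {C : numClosedFieldType} (x1 x2 x3 x4 : C) : C :=
  x1 * x2 * x3 + x1 * x2 * x4 + x1 * x3 * x4 + x2 * x3 * x4.

Definition S1p {C : numClosedFieldType} (b1 b2 b3 b4 : C) := esym1 b1 b2 b3 b4.
Definition S3p {C : numClosedFieldType} (b1 b2 b3 b4 : C) := esym3 b1 b2 b3 b4.
Definition S1m {C : numClosedFieldType} (b1 b2 b3 b4 : C) := esym1 b1^-1 b2^-1 b3^-1 b4^-1.
Definition S3m {C : numClosedFieldType} (b1 b2 b3 b4 : C) := esym3 b1^-1 b2^-1 b3^-1 b4^-1.

Definition Feq {C : numClosedFieldType} (b1 b2 b3 b4 L : C) : C :=
  let B := b1 * b2 * b3 * b4 in
  - (B * L * (S1p b1 b2 b3 b4 + 2 * S1m b1 b2 b3 b4 * L + S3m b1 b2 b3 b4 * L ^+ 2))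
    / (B - L ^+ 2) ^+ 2.

Definition Geq {C : numClosedFieldType} (b1 b2 b3 b4 L : C) : C :=
  let B := b1 * b2 * b3 * b4 in
  - (B * L * (S3p b1 b2 b3 b4 + 2 * S1p b1 b2 b3 b4 * L + S1m b1 b2 b3 b4 * L ^+ 2))
    / (B - L ^+ 2) ^+ 2.

Definition muC {C : numClosedFieldType} (b1 b2 b3 b4 L : C) : C :=
  let B := b1 * b2 * b3 * b4 in
  L * (L + b1 * b2) * (L + b1 * b3) * (L + b1 * b4) * (L + b2 * b3)
    * (L + b2 * b4) * (L + b3 * b4) / (B - L ^+ 2) ^+ 4.

Definition Ffun {C : numClosedFieldType} (b1 b2 b3 b4 L phi : C) : C :=
  phi + Feq b1 b2 b3 b4 L + muC b1 b2 b3 b4 L * phi^-1.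

Definition Gfun {C : numClosedFieldType} (b1 b2 b3 b4 L phi : C) : C :=
  let B := b1 * b2 * b3 * b4 in
  L * phi + Geq b1 b2 b3 b4 L + B / L * muC b1 b2 b3 b4 L * phi^-1.

Definition lambdaC {C : numClosedFieldType} (b1 b2 b3 b4 L : C) : C := L ^+ 2 / (b1 * b2 * b3 * b4).

(* Main.v *)
Require Import Defs.
From HB Require Import structures.
From mathcomp Require Import all_boot all_order all_algebra all_field.
From mathcomp Require Import ring.
Import GRing.Theory Num.Theory.
Local Open Scope ring_scope.

Lemma alg1 (K : fieldType) (G Fq Gq lam p L B e1 e2 e3 : K) :
  L != 0 -> B != 0 -> lam = L^+2/B ->
  e1 = - B * (- 2 * lam * Gq / L^+2 + Fq * (1 + lam) / L) ->
  e2 = B * (lam * Gq^+2 / L^+2 + (1 - lam)^+2 * p - Fq * (1 + lam) * Gq / L + Fq^+2 - (1 + lam) / L) ->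
  e3 = - B * ((1 + lam) * Gq / L - 2 * Fq) ->
  G^+2 * (lam * ((G - Gq)/L)^+2 + (1 - lam)^+2 * p + Fq * (1 + lam) * ((G - Gq)/L) + Fq^+2)
   - G * ((1 + lam) * ((G - Gq)/L) + 2 * Fq) + 1
  = (G^+4 - e1 * G^+3 + e2 * G^+2 - e3 * G + B) / B.
Proof.
move=> hL hB -> -> -> ->. field. by rewrite hB hL.
Qed.
Lemma alg2 (K : fieldType) (y Fq Gq mu L B e1 e2 e3 : K) :
  L != 0 ->
  e3 = 2 * B * Fq - Gq * (L + B / L) ->
  e2 = B * (Fq^+2 - 2 * mu) + (L^+2 + B^+2 / L^+2) * mu - Gq * (L + B / L) * Fq + Gq^+2 - (L + B / L) ->
  e1 = 2 * Gq - (L + B / L) * Fq ->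
  y^+2 * (B * ((y - Fq)^+2 - 2 * mu) + (L^+2 + B^+2 / L^+2) * mu + Gq * (L + B / L) * (y - Fq) + Gq^+2)
   - y * ((L + B / L) * (y - Fq) + 2 * Gq) + 1
  = B * y^+4 - e3 * y^+3 + e2 * y^+2 - e1 * y + 1.
Proof.
move=> hL -> -> ->. field. by rewrite hL.
Qed.
Definition Pe {K : fieldType} (e1 e2 e3 B L : K) : K :=
  L^+6 + e2 * L^+5 + (e1 * e3 - B) * L^+4 + (e1^+2 * B + e3^+2 - 2 * e2 * B) * L^+3
  + B * (e1 * e3 - B) * L^+2 + B^+2 * e2 * L + B^+3.

Lemma coefs (K : fieldType) (e1 e2 e3 B L : K) :
  B != 0 -> L != 0 -> B - L^+2 != 0 ->
  let D := B - L^+2 in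
  let Fq := - L * (e1 * B + 2 * e3 * L + e1 * L^+2) / D^+2 in
  let Gq := - L * (e3 * B + 2 * e1 * B * L + e3 * L^+2) / D^+2 in
  let mu := L * Pe e1 e2 e3 B L / D^+4 in
  let lam := L^+2 / B in
  let p := mu / lam in
  [/\ e1 = - B * (- 2 * lam * Gq / L^+2 + Fq * (1 + lam) / L),
      e2 = B * (lam * Gq^+2 / L^+2 + (1 - lam)^+2 * p - Fq * (1 + lam) * Gq / L + Fq^+2 - (1 + lam) / L)
    & e3 = - B * ((1 + lam) * Gq / L - 2 * Fq)] /\
  [/\ e3 = 2 * B * Fq - Gq * (L + B / L),
      e2 = B * (Fq^+2 - 2 * mu) + (L^+2 + B^+2 / L^+2) * mu - Gq * (L + B / L) * Fq + Gq^+2 - (L + B / L)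
    & e1 = 2 * Gq - (L + B / L) * Fq].
Proof.
move=> hB hL hD D Fq Gq mu lam p.
rewrite /p /mu /lam /Fq /Gq /D /Pe.
split; split; field; by rewrite ?hB ?hL ?hD.
Qed.
Lemma core (K : fieldType) (phi L Fq Gq mu B : K) :
  phi != 0 -> L != 0 -> B != 0 ->
  let lam := L^+2 / B in
  let F := phi + Fq + mu * phi^-1 in
  let G := L * phi + Gq + B / L * mu * phi^-1 in
  let Fb := lam * phi + Fq + mu * (lam * phi)^-1 in
  let Gb := L * (lam * phi) + Gq + B / L * mu * (lam * phi)^-1 in
  (G * F - 1) * (G * Fb - 1) =
    G^+2 * (lam * ((G - Gq)/L)^+2 + (1 - lam)^+2 * (mu / lam) + Fq * (1 + lam) * ((G - Gq)/L) + Fq^+2)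
   - G * ((1 + lam) * ((G - Gq)/L) + 2 * Fq) + 1
  /\
  (G * Fb - 1) * (Gb * Fb - 1) =
   Fb^+2 * (B * ((Fb - Fq)^+2 - 2 * mu) + (L^+2 + B^+2 / L^+2) * mu + Gq * (L + B / L) * (Fb - Fq) + Gq^+2)
   - Fb * ((L + B / L) * (Fb - Fq) + 2 * Gq) + 1.
Proof.
move=> hphi hL hB lam F G Fb Gb.
have hlam : lam != 0 by rewrite /lam mulf_neq0 ?invr_eq0 ?expf_neq0.
have hs : (G - Gq) / L = phi + mu / (lam * phi).
  rewrite /G /lam; field; by rewrite ?hphi ?hL ?hB.
have hFFb : F * Fb = lam * (phi + mu / (lam * phi))^+2 + (1 - lam)^+2 * (mu / lam)
    + Fq * (1 + lam) * (phi + mu / (lam * phi)) + Fq^+2.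
  rewrite /F /Fb; field; by rewrite ?hphi ?hlam.
have hFs : F + Fb = (1 + lam) * (phi + mu / (lam * phi)) + 2 * Fq.
  rewrite /F /Fb; field; by rewrite ?hphi ?hlam.
have ht : Fb - Fq = lam * phi + mu / (lam * phi).
  rewrite /Fb; field; by rewrite ?hphi ?hlam.
have hGGb : G * Gb = B * ((lam * phi + mu / (lam * phi))^+2 - 2 * mu)
   + (L^+2 + B^+2 / L^+2) * mu + Gq * (L + B / L) * (lam * phi + mu / (lam * phi)) + Gq^+2.
  rewrite /G /Gb /lam; field; by rewrite ?hphi ?hL ?hB.
have hGs : G + Gb = (L + B / L) * (lam * phi + mu / (lam * phi)) + 2 * Gq.
  rewrite /G /Gb /lam; field; by rewrite ?hphi ?hL ?hB.
split.
  rewrite hs -hFFb -hFs. clearbody F G Fb Gb. ring.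
rewrite ht -hGGb -hGs. clearbody F G Fb Gb. ring.
Qed.

Theorem mainTheorem3 (C : numClosedFieldType) (b1 b2 b3 b4 L : C)
  (hb1 : b1 != 0) (hb2 : b2 != 0) (hb3 : b3 != 0) (hb4 : b4 != 0)
  (hL : L != 0) (hLB : L ^+ 2 != b1 * b2 * b3 * b4) :
  forall phi : C, phi != 0 ->
  let F := Ffun b1 b2 b3 b4 L phi in
  let G := Gfun b1 b2 b3 b4 L phi in
  let Fb := Ffun b1 b2 b3 b4 L (lambdaC b1 b2 b3 b4 L * phi) in
  let Gb := Gfun b1 b2 b3 b4 L (lambdaC b1 b2 b3 b4 L * phi) in
  (G * F - 1) * (G * Fb - 1)
    = (b1^-1 * G - 1) * (b2^-1 * G - 1) * (b3^-1 * G - 1) * (b4^-1 * G - 1)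
  /\
  (G * Fb - 1) * (Gb * Fb - 1)
    = (b1 * Fb - 1) * (b2 * Fb - 1) * (b3 * Fb - 1) * (b4 * Fb - 1).
Proof.
move=> phi hphi F G Fb Gb.
have hB : b1 * b2 * b3 * b4 != 0 by rewrite !mulf_neq0.
have hD : b1 * b2 * b3 * b4 - L ^+ 2 != 0 by rewrite subr_eq0 eq_sym.
pose e1 := b1 + b2 + b3 + b4.
pose e2 := b1 * b2 + b1 * b3 + b1 * b4 + b2 * b3 + b2 * b4 + b3 * b4.
pose e3 := b1 * b2 * b3 + b1 * b2 * b4 + b1 * b3 * b4 + b2 * b3 * b4.
have hFeq : Feq b1 b2 b3 b4 L = - L * (e1 * (b1 * b2 * b3 * b4) + 2 * e3 * L + e1 * L^+2)
      / (b1 * b2 * b3 * b4 - L^+2)^+2.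
  rewrite /Feq /S1p /S3p /S1m /S3m /esym1 /esym3 /e1 /e3 /=.
  field; by rewrite ?hb1 ?hb2 ?hb3 ?hb4 ?hD.
have hGeq : Geq b1 b2 b3 b4 L = - L * (e3 * (b1 * b2 * b3 * b4) + 2 * e1 * (b1 * b2 * b3 * b4) * L + e3 * L^+2)
      / (b1 * b2 * b3 * b4 - L^+2)^+2.
  rewrite /Geq /S1p /S3p /S1m /S3m /esym1 /esym3 /e1 /e3 /=.
  field; by rewrite ?hb1 ?hb2 ?hb3 ?hb4 ?hD.
have hmu : muC b1 b2 b3 b4 L = L * Pe e1 e2 e3 (b1 * b2 * b3 * b4) L / (b1 * b2 * b3 * b4 - L^+2)^+4.
  rewrite /muC /=; congr (_ / _); rewrite /Pe /e1 /e2 /e3; ring.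
have [[c1 c2 c3] [d3 d2 d1]] := @coefs _ e1 e2 e3 _ _ hB hL hD.
rewrite -hFeq -hGeq -hmu in c1 c2 c3 d3 d2 d1.
have hp1 : forall X : C, (b1^-1 * X - 1) * (b2^-1 * X - 1) * (b3^-1 * X - 1) * (b4^-1 * X - 1)
   = (X^+4 - e1 * X^+3 + e2 * X^+2 - e3 * X + b1 * b2 * b3 * b4) / (b1 * b2 * b3 * b4).
  move=> X; rewrite /e1 /e2 /e3; field; by rewrite ?hb1 ?hb2 ?hb3 ?hb4.
have hp2 : forall X : C, (b1 * X - 1) * (b2 * X - 1) * (b3 * X - 1) * (b4 * X - 1)
   = (b1 * b2 * b3 * b4) * X^+4 - e3 * X^+3 + e2 * X^+2 - e1 * X + 1.
  move=> X; rewrite /e1 /e2 /e3; ring.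
have [h1 h2] := @core _ phi L (Feq b1 b2 b3 b4 L) (Geq b1 b2 b3 b4 L) (muC b1 b2 b3 b4 L) _ hphi hL hB.
rewrite /F /G /Fb /Gb /Ffun /Gfun /lambdaC.
split.
  rewrite h1 hp1. exact: alg1 hL hB erefl c1 c2 c3.
rewrite h2 hp2. exact: alg2 hL d3 d2 d1.
Qed.
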